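(* Let $\mathfrak{A}$ be an atomic weakly associative relation algebra, let $\mathfrak{B}=\langle B,T_\kappa,E_{\kappa\lambda}\rangle_{\kappa,\lambda<3}$ be its suitable structure, and let $t=\langle t_0,t_1,t_2\rangle\in B$. Then (i) $E_{10}\cap T^*_0\{t\}=\{\langle t_0,t_0,t_0^{\mathsf d}\rangle\}$, (ii) $E_{01}\cap T^*_1\{t\}=\{\langle t_1,t_1,t_1^{\mathsf d}\rangle\}$, (iii) $E_{12}\cap T^*_2\{t\}=\{\langle t_2^{\mathsf r},t_2,t_2\rangle\}$, (iv) $E_{21}\cap T^*_1\{t\}=\{\langle t_1^{\mathsf r},t_1,t_1\rangle\}$, (v) $E_{02}\cap T^*_2\{t\}=\{\langle \breve{t_2},t_2^{\mathsf d},t_2\rangle\}$, (vi) $E_{20}\cap T^*_0\{t\}=\{\langle t_0,t_0^{\mathsf r},\breve{t_0}\rangle\}$.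
   Context: WA: algebras $\langle A,+,\overline{\phantom{x}},;,\breve{\phantom{x}},1'\rangle$ with $x\cdot y=\overline{\overline{x}+\overline{y}}$, $0'=\overline{1'}$, $1=1'+0'$, $0=\overline{1}$, satisfying for all $x,y,z$: $x+y=y+x$; $x+(y+z)=(x+y)+z$; $\overline{\overline{x}+\overline{y}}+\overline{\overline{x}+y}=x$; $((x\cdot 1');1);1=(x\cdot1');1$; $(x+y);z=x;z+y;z$; $x;1'=x$; $\breve{\breve{x}}=x$; $\breve{(x+y)}=\breve{x}+\breve{y}$; $\breve{(x;y)}=\breve{y};\breve{x}$; $\breve{x};\overline{x;y}+\overline{y}=\overline{y}$. Domain and range: $x^{\mathsf d}=(x;\breve{x})\cdot1'$, $x^{\mathsf r}=(\breve{x};x)\cdot1'$. Suitable structure: $B=\{s\in{}^3\mathrm{At}(\mathfrak{A}): s_2;s_0\ge s_1\}$; $T_\kappa=\{\langle s,t\rangle\in B\times B:s_\kappa=t_\kappa\}$; $E_{\kappa\kappa}=B$; for distinct $\kappa,\lambda$ with third index $\mu$, $E_{\kappa\lambda}=\{s\in B:s_\mu\le1'\}$. $T^*_\kappa(X)=\{y\in B:\exists x\in X\ \langle y,x\rangle\in T_\kappa\}$. *)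

(* Defs.v *)
Record WA := {
  car :> Type;
  plus : car -> car -> car;
  compl : car -> car;
  comp : car -> car -> car;
  conv : car -> car;
  one' : car;
  (* derived operations are defined below; axioms are written with them unfolded *)
  ax_plusC : forall x y, plus x y = plus y x;
  ax_plusA : forall x y z, plus x (plus y z) = plus (plus x y) z;
  ax_huntington : forall x y,
      plus (compl (plus (compl x) (compl y))) (compl (plus (compl x) y)) = x;
  ax_wassoc : forall x,
      let one := plus one' (compl one') in
      let meet1' := compl (plus (compl x) (compl one')) in
      comp (comp meet1' one) one = comp meet1' one;
  ax_compDl : forall x y z, comp (plus x y) z = plus (comp x z) (comp y z);
  ax_comp1' : forall x, comp x one' = x;
  ax_convK : forall x, conv (conv x) = x;
  ax_convD : forall x y, conv (plus x y) = plus (conv x) (conv y);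
  ax_convM : forall x y, conv (comp x y) = comp (conv y) (conv x);
  ax_tarski : forall x y,
      plus (comp (conv x) (compl (comp x y))) (compl y) = compl y
}.

Section Ops.
Variable A : WA.
Definition meet (x y : A) : A := compl A (plus A (compl A x) (compl A y)).
Definition diversity : A := compl A (one' A).
Definition top : A := plus A (one' A) diversity.
Definition bot : A := compl A top.
Definition le (x y : A) : Prop := plus A x y = y.
Definition dom (x : A) : A := meet (comp A x (conv A x)) (one' A).
Definition ran (x : A) : A := meet (comp A (conv A x) x) (one' A).

Definition is_atom (a : A) : Prop :=
  a <> bot /\ forall x, le x a -> x = bot \/ x = a.
Definition atomic : Prop :=
  forall x : A, x <> bot -> exists a, is_atom a /\ le a x.

Definition triple := (A * A * A)%type.
Definition t0 (s : triple) : A := fst (fst s).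
Definition t1 (s : triple) : A := snd (fst s).
Definition t2 (s : triple) : A := snd s.
Definition mk3 (a b c : A) : triple := (a, b, c).

Inductive idx := I0 | I1 | I2.
Definition proj (k : idx) (s : triple) : A :=
  match k with I0 => t0 s | I1 => t1 s | I2 => t2 s end.
Definition third (k l : idx) : idx :=
  match k, l with
  | I0, I1 | I1, I0 => I2
  | I0, I2 | I2, I0 => I1
  | _, _ => I0
  end.

Definition Bset (s : triple) : Prop :=
  is_atom (t0 s) /\ is_atom (t1 s) /\ is_atom (t2 s) /\
  le (t1 s) (comp A (t2 s) (t0 s)).
Definition Trel (k : idx) (s t : triple) : Prop :=
  Bset s /\ Bset t /\ proj k s = proj k t.
Definition Eset (k l : idx) (s : triple) : Prop :=
  if (match k, l with I0,I0 | I1,I1 | I2,I2 => true | _,_ => false end)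
  then Bset s
  else Bset s /\ le (proj (third k l) s) (one' A).
Definition Tstar (k : idx) (X : triple -> Prop) (y : triple) : Prop :=
  Bset y /\ exists x, X x /\ Trel k y x.
End Ops.
Arguments dom {A}. Arguments ran {A}. Arguments mk3 {A}.
Arguments t0 {A}. Arguments t1 {A}. Arguments t2 {A}.

(* Main.v *)
Require Import Defs.
From Stdlib Require Import Classical.

Section BA.
Variable A : WA.
Local Notation P := (plus A).
Local Notation N := (compl A).
Local Notation C := (comp A).
Local Notation V := (conv A).
Local Notation E1 := (one' A).
Local Notation M := (meet A).
Local Notation L := (le A).
Local Notation BOT := (bot A).
Local Notation TOP := (top A).

Lemma pC x y : P x y = P y x. Proof. apply ax_plusC. Qed.
Lemma pA x y z : P x (P y z) = P (P x y) z. Proof. apply ax_plusA. Qed.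

Lemma mC x y : M x y = M y x. Proof. unfold meet. rewrite pC. reflexivity. Qed.

Lemma Eh x w : P (M x w) (M x (N w)) = x.
Proof. rewrite pC. unfold meet. apply ax_huntington. Qed.

Lemma swap4 a b c d : P (P a b) (P c d) = P (P a c) (P b d).
Proof.
  rewrite <- !pA. f_equal. rewrite !pA. f_equal. apply pC.
Qed.

Lemma one_const x w : P x (N x) = P w (N w).
Proof.
  transitivity (P (P (M x w) (M x (N w))) (P (M (N x) w) (M (N x) (N w)))).
  { rewrite !Eh. reflexivity. }
  transitivity (P (P (M w x) (M w (N x))) (P (M (N w) x) (M (N w) (N x)))).
  2:{ rewrite !Eh. reflexivity. }
  rewrite (mC w x), (mC w (N x)), (mC (N w) x), (mC (N w) (N x)).
  apply swap4.
Qed.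

Lemma one_top x : P x (N x) = TOP.
Proof. unfold top, diversity. apply one_const. Qed.

Lemma meet_compl x : M x (N x) = BOT.
Proof. unfold meet, bot. rewrite one_top. reflexivity. Qed.

Lemma nn x : N (N x) = x.
Proof.
  pose proof (Eh (N (N x)) x) as H.
  rewrite (mC (N (N x)) (N x)), meet_compl in H.
  pose proof (Eh x (N x)) as H2. rewrite meet_compl in H2.
  rewrite mC in H. rewrite <- H. rewrite pC. exact H2.
Qed.

Lemma n_top : N TOP = BOT. Proof. reflexivity. Qed.
Lemma n_bot : N BOT = TOP. Proof. unfold bot. apply nn. Qed.

Lemma top_bot : P TOP BOT = TOP.
Proof. rewrite <- n_top. apply one_top. Qed.

Lemma top_top : P TOP TOP = TOP.
Proof.
  pose proof (Eh BOT BOT) as H. rewrite meet_compl in H.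
  assert (Hm : M BOT BOT = N (P TOP TOP)).
  { unfold meet. rewrite n_bot. reflexivity. }
  rewrite Hm in H.
  set (v := P TOP TOP) in *.
  assert (E : TOP = P (P v (N v)) BOT) by (rewrite one_top, top_bot; reflexivity).
  rewrite <- pA, H in E. unfold v in E. rewrite <- pA, top_bot in E.
  symmetry. exact E.
Qed.

Lemma bot_bot : P BOT BOT = BOT.
Proof.
  pose proof (Eh BOT BOT) as H. rewrite meet_compl in H.
  unfold meet in H. rewrite n_bot, top_top, n_top in H. exact H.
Qed.

Lemma p_bot x : P x BOT = x.
Proof.
  pose proof (Eh x x) as H. rewrite meet_compl in H.
  rewrite <- H, <- pA, bot_bot. reflexivity.
Qed.

Lemma meet_id x : M x x = x.
Proof. pose proof (Eh x x) as H. rewrite meet_compl, p_bot in H. exact H. Qed.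

Lemma idem x : P x x = x.
Proof.
  pose proof (meet_id (N x)) as H. unfold meet in H. rewrite nn in H.
  rewrite <- (nn (P x x)), H, nn. reflexivity.
Qed.

Lemma le_refl x : L x x. Proof. apply idem. Qed.
Lemma le_trans x y z : L x y -> L y z -> L x z.
Proof. unfold le. intros H1 H2. rewrite <- H2, pA, H1. reflexivity. Qed.
Lemma le_antisym x y : L x y -> L y x -> x = y.
Proof. unfold le. intros H1 H2. rewrite <- H1, <- H2 at 1. apply pC. Qed.
Lemma le_join_l x y : L x (P x y). Proof. unfold le. rewrite pA, idem. reflexivity. Qed.
Lemma join_lub x y z : L x z -> L y z -> L (P x y) z.
Proof. unfold le. intros H1 H2. rewrite <- pA, H2, H1. reflexivity. Qed.
Lemma bot_le x : L BOT x. Proof. unfold le. rewrite pC. apply p_bot. Qed.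
Lemma le_top x : L x TOP.
Proof. unfold le. rewrite <- (one_top x), pA, idem. reflexivity. Qed.
Lemma meet_l x y : L (M x y) x.
Proof. unfold le. rewrite <- (Eh x y) at 2 3. rewrite pA, idem. reflexivity. Qed.
Lemma meet_r x y : L (M x y) y. Proof. rewrite mC. apply meet_l. Qed.
Lemma antitone x y : L x y -> L (N y) (N x).
Proof.
  unfold le. intros H. rewrite <- H.
  assert (N (P x y) = M (N x) (N y)). { unfold meet. rewrite !nn. reflexivity. }
  rewrite H0. apply meet_l.
Qed.
Lemma meet_glb z x y : L z x -> L z y -> L z (M x y).
Proof.
  intros H1 H2. apply antitone in H1. apply antitone in H2.
  pose proof (join_lub _ _ _ H1 H2) as H. apply antitone in H.
  rewrite nn in H. exact H.
Qed.
Lemma meet_bot_le y x : M y (N x) = BOT -> L y x.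
Proof.
  intros H. pose proof (Eh y x) as E. rewrite H, p_bot in E.
  rewrite <- E. apply meet_r.
Qed.
Lemma le_bot x : L x BOT -> x = BOT.
Proof. intros H. apply le_antisym; auto. apply bot_le. Qed.
Lemma meet_mono x y z : L x y -> L (M x z) (M y z).
Proof. intros H. apply meet_glb. eapply le_trans. apply meet_l. exact H. apply meet_r. Qed.
Lemma meet_of_le x y : L x y -> M x y = x.
Proof. intros H. apply le_antisym. apply meet_l. apply meet_glb; auto. apply le_refl. Qed.
Lemma meet_top x : M x TOP = x. Proof. apply meet_of_le, le_top. Qed.
Lemma nz_le x y : L x y -> x <> BOT -> y <> BOT.
Proof. intros H Hx Hy. subst. apply Hx, le_bot, H. Qed.
Lemma le_meet_nz x y : L x y -> x <> BOT -> M x y <> BOT.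
Proof. intros H Hx. rewrite meet_of_le; auto. Qed.


Lemma convK x : V (V x) = x. Proof. apply ax_convK. Qed.
Lemma comp_mono_l x y z : L x y -> L (C x z) (C y z).
Proof. unfold le. intros H. rewrite <- ax_compDl, H. reflexivity. Qed.
Lemma conv_mono x y : L x y -> L (V x) (V y).
Proof. unfold le. intros H. rewrite <- ax_convD, H. reflexivity. Qed.
Lemma comp_Dr x y z : C x (P y z) = P (C x y) (C x z).
Proof.
  rewrite <- (convK (C x (P y z))), ax_convM, ax_convD, ax_compDl, ax_convD,
    !ax_convM, !convK. reflexivity.
Qed.
Lemma comp_mono_r x y z : L x y -> L (C z x) (C z y).
Proof. unfold le. intros H. rewrite <- comp_Dr, H. reflexivity. Qed.
Lemma conv_one : V E1 = E1.
Proof.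
  assert (H : C (V E1) E1 = V (C (V E1) E1)) by (rewrite ax_convM, convK; reflexivity).
  rewrite ax_comp1', convK in H. exact H.
Qed.
Lemma comp_1l x : C E1 x = x.
Proof.
  rewrite <- (convK (C E1 x)), ax_convM, conv_one, ax_comp1', convK. reflexivity.
Qed.
Lemma conv_bot : V BOT = BOT.
Proof.
  apply le_antisym. 2: apply bot_le.
  pose proof (conv_mono _ _ (bot_le (V BOT))) as H. rewrite convK in H. exact H.
Qed.
Lemma conv_meet x y : V (M x y) = M (V x) (V y).
Proof.
  apply le_antisym.
  - apply meet_glb; apply conv_mono; [apply meet_l | apply meet_r].
  - rewrite <- (convK (M (V x) (V y))). apply conv_mono.
    apply meet_glb.
    + rewrite <- (convK x) at 2. apply conv_mono, meet_l.
    + rewrite <- (convK y) at 2. apply conv_mono, meet_r.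
Qed.
Lemma conv_inj x y : V x = V y -> x = y.
Proof. intros H. rewrite <- (convK x), H, convK. reflexivity. Qed.

Lemma tarski x y : L (C (V x) (N (C x y))) (N y). Proof. apply ax_tarski. Qed.

Lemma V1 z x y : M z (C x y) = BOT -> M (C (V x) z) y = BOT.
Proof.
  intros H. rewrite <- (nn (C x y)) in H. apply meet_bot_le in H.
  apply le_bot. eapply le_trans.
  - apply meet_mono. eapply le_trans. apply comp_mono_r. exact H. apply tarski.
  - rewrite mC, meet_compl. apply le_refl.
Qed.
Lemma V1c z x y : M (C (V x) z) y = BOT -> M z (C x y) = BOT.
Proof.
  intros H. rewrite mC in H. apply V1 in H. rewrite convK in H. rewrite mC. exact H.
Qed.
Lemma V2 z x y : M z (C x y) = BOT -> M (C z (V y)) x = BOT.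
Proof.
  intros H. apply (f_equal V) in H. rewrite conv_meet, ax_convM, conv_bot in H.
  apply V1 in H. rewrite convK in H.
  apply (f_equal V) in H. rewrite conv_meet, ax_convM, conv_bot, !convK in H. exact H.
Qed.
Lemma V2c z x y : M (C z (V y)) x = BOT -> M z (C x y) = BOT.
Proof.
  intros H. rewrite mC in H. apply V2 in H. rewrite convK in H. rewrite mC. exact H.
Qed.
Lemma P1 z x y : M z (C x y) <> BOT -> M (C (V x) z) y <> BOT.
Proof. intros H1 H2. apply H1, V1c, H2. Qed.
Lemma P2 z x y : M z (C x y) <> BOT -> M (C z (V y)) x <> BOT.
Proof. intros H1 H2. apply H1, V2c, H2. Qed.

Lemma comp_sub_l e x : L e E1 -> L (C e x) x.
Proof. intros H. rewrite <- (comp_1l x) at 2. apply comp_mono_l, H. Qed.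
Lemma comp_sub_r e x : L e E1 -> L (C x e) x.
Proof. intros H. rewrite <- (ax_comp1' A x) at 2. apply comp_mono_r, H. Qed.

Lemma atom_nz a : is_atom A a -> a <> BOT. Proof. intros [H _]. exact H. Qed.
Lemma atom_le_eq x y : is_atom A x -> is_atom A y -> L x y -> x = y.
Proof. intros [Hx _] [_ Hy] H. destruct (Hy x H); [contradiction|assumption]. Qed.
Lemma atom_meet a x : is_atom A a -> M a x <> BOT -> L a x.
Proof.
  intros [Ha Hy] H. destruct (Hy _ (meet_l a x)) as [E|E]. contradiction.
  rewrite <- E. apply meet_r.
Qed.
Lemma atom_conv a : is_atom A a -> is_atom A (V a).
Proof.
  intros [Ha Hy]. split.
  - intros E. apply Ha. rewrite <- (convK a), E. apply conv_bot.
  - intros x Hx. apply conv_mono in Hx. rewrite convK in Hx.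
    destruct (Hy _ Hx) as [E|E]; [left|right].
    + rewrite <- (convK x), E. apply conv_bot.
    + rewrite <- E, convK. reflexivity.
Qed.
Lemma subid_conv e : is_atom A e -> L e E1 -> V e = e.
Proof.
  intros He H1.
  assert (H : M e (C e E1) <> BOT) by (rewrite ax_comp1', meet_id; apply atom_nz, He).
  apply P1 in H.
  assert (Hve : L (V e) E1) by (rewrite <- conv_one; apply conv_mono, H1).
  assert (Hc : C (V e) e <> BOT) by (intro E; apply H; rewrite E; apply le_bot, meet_l).
  assert (Hm : M (V e) e <> BOT).
  { eapply nz_le. 2: exact Hc. apply meet_glb. apply comp_sub_r, H1. apply comp_sub_l, Hve. }
  rewrite mC in Hm. apply atom_meet in Hm; auto.
  symmetry. apply atom_le_eq; auto. apply atom_conv, He.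
Qed.

Lemma wassoc e : L e E1 -> C (C e TOP) TOP = C e TOP.
Proof.
  intros H. pose proof (ax_wassoc A e) as W. cbv zeta in W.
  change (C (C (M e E1) TOP) TOP = C (M e E1) TOP) in W.
  rewrite meet_of_le in W; auto.
Qed.

Lemma dom_unique a e e' : is_atom A a -> is_atom A e -> is_atom A e' ->
  L e E1 -> L e' E1 -> L e (C a (V a)) -> L e' (C a (V a)) -> e = e'.
Proof.
  intros Ha He He' H1 H1' H2 H2'.
  assert (Hm : M e (C a (V a)) <> BOT) by (apply le_meet_nz; auto; apply atom_nz; auto).
  apply P2 in Hm. rewrite convK, mC in Hm. apply atom_meet in Hm; auto.
  assert (Hl : L e' (C e TOP)).
  { rewrite <- wassoc by auto. eapply le_trans. exact H2'.
    eapply le_trans. apply comp_mono_l. exact Hm.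
    eapply le_trans. apply comp_mono_l, comp_mono_r, le_top.
    apply comp_mono_r, le_top. }
  assert (Hn : M e' (C e TOP) <> BOT) by (apply le_meet_nz; auto; apply atom_nz; auto).
  apply P1 in Hn. rewrite meet_top, subid_conv in Hn by auto.
  assert (Hee : M e e' <> BOT).
  { eapply nz_le. 2: exact Hn. apply meet_glb. apply comp_sub_r, H1'. apply comp_sub_l, H1. }
  apply atom_meet in Hee; auto. apply atom_le_eq; auto.
Qed.

Lemma dom_nz a : is_atom A a -> dom a <> BOT.
Proof.
  intros Ha. unfold dom.
  assert (H : M a (C E1 a) <> BOT) by (rewrite comp_1l, meet_id; apply atom_nz, Ha).
  apply P2 in H. exact H.
Qed.

Lemma dom_atom a : atomic A -> is_atom A a -> is_atom A (dom a).
Proof.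
  intros HA Ha. split. apply dom_nz, Ha.
  intros x Hx. destruct (classic (x = BOT)) as [H|H]; [left; exact H | right].
  destruct (HA x H) as [e [He Hex]]. apply le_antisym; auto.
  apply meet_bot_le. destruct (classic (M (dom a) (N x) = BOT)) as [H0|H0]; auto.
  exfalso. destruct (HA _ H0) as [e' [He' He'l]].
  assert (D1 : L (dom a) E1) by apply meet_r.
  assert (D2 : L (dom a) (C a (V a))) by apply meet_l.
  assert (Le' : L e' (dom a)) by (eapply le_trans; [exact He'l | apply meet_l]).
  assert (Le : L e (dom a)) by (eapply le_trans; eauto).
  assert (Eq : e = e').
  { apply (dom_unique a); eauto using le_trans. }
  subst e'. apply (atom_nz _ He). apply le_bot.
  rewrite <- (meet_compl x). apply meet_glb; auto.
  eapply le_trans; [exact He'l | apply meet_r].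
Qed.

Lemma ran_dom a : ran a = dom (V a).
Proof. unfold ran, dom. rewrite convK. reflexivity. Qed.

Lemma ran_atom a : atomic A -> is_atom A a -> is_atom A (ran a).
Proof. intros HA Ha. rewrite ran_dom. apply dom_atom, atom_conv; auto. Qed.

Lemma L_dom a e : atomic A -> is_atom A a -> is_atom A e -> L e E1 -> L a (C e a) -> e = dom a.
Proof.
  intros HA Ha He H1 H.
  assert (Hm : M a (C e a) <> BOT) by (apply le_meet_nz; auto; apply atom_nz; auto).
  apply P2 in Hm. rewrite mC in Hm. apply atom_meet in Hm; auto.
  apply atom_le_eq; auto. apply dom_atom; auto. apply meet_glb; auto.
Qed.

Lemma dom_ok a : is_atom A a -> L a (C (dom a) a).
Proof.
  intros Ha.
  assert (Hm : M (dom a) (C a (V a)) <> BOT) by (apply le_meet_nz; [apply meet_l | apply dom_nz, Ha]).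
  apply P2 in Hm. rewrite convK, mC in Hm. apply atom_meet in Hm; auto.
Qed.

Lemma L_ran c s : atomic A -> is_atom A c -> is_atom A s -> L s E1 -> L c (C c s) -> s = ran c.
Proof.
  intros HA Hc Hs H1 H.
  assert (Hm : M c (C c s) <> BOT) by (apply le_meet_nz; auto; apply atom_nz; auto).
  apply P1 in Hm. rewrite mC in Hm. apply atom_meet in Hm; auto.
  apply atom_le_eq; auto. apply ran_atom; auto. apply meet_glb; auto.
Qed.

Lemma ran_nz c : is_atom A c -> ran c <> BOT.
Proof. intros Hc. rewrite ran_dom. apply dom_nz, atom_conv, Hc. Qed.

Lemma ran_ok c : is_atom A c -> L c (C c (ran c)).
Proof.
  intros Hc.
  assert (Hm : M (ran c) (C (V c) c) <> BOT) by (apply le_meet_nz; [apply meet_l | apply ran_nz, Hc]).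
  apply P1 in Hm. rewrite convK, mC in Hm. apply atom_meet in Hm; auto.
Qed.

Lemma main (HA : atomic A) (t : triple A) (Ht : Bset A t) :
  (forall s, (Eset A I1 I0 s /\ Tstar A I0 (fun x => x = t) s) <->
             s = mk3 (t0 t) (t0 t) (dom (t0 t))) /\
  (forall s, (Eset A I0 I1 s /\ Tstar A I1 (fun x => x = t) s) <->
             s = mk3 (t1 t) (t1 t) (dom (t1 t))) /\
  (forall s, (Eset A I1 I2 s /\ Tstar A I2 (fun x => x = t) s) <->
             s = mk3 (ran (t2 t)) (t2 t) (t2 t)) /\
  (forall s, (Eset A I2 I1 s /\ Tstar A I1 (fun x => x = t) s) <->
             s = mk3 (ran (t1 t)) (t1 t) (t1 t)) /\
  (forall s, (Eset A I0 I2 s /\ Tstar A I2 (fun x => x = t) s) <->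
             s = mk3 (conv A (t2 t)) (dom (t2 t)) (t2 t)) /\
  (forall s, (Eset A I2 I0 s /\ Tstar A I0 (fun x => x = t) s) <->
             s = mk3 (t0 t) (ran (t0 t)) (conv A (t0 t))).
Proof.
  destruct t as [[a b] c]. pose proof Ht as Ht'.
  destruct Ht' as (Ha & Hb & Hc & Hbca). cbn in Ha, Hb, Hc, Hbca.
  assert (Fin : forall s, Bset A s -> forall k, proj A k s = proj A k ((a,b),c) ->
     Tstar A k (fun x => x = ((a,b),c)) s).
  { intros s0 Hs k Hk. split; [exact Hs|]. exists ((a,b),c). split; [reflexivity | split; [exact Hs | split; [exact Ht | exact Hk]]]. }
  split.
  { intro s; split.
    - intros [[HB H2] [_ [x [-> [HB' [_ Hp]]]]]].
    destruct s as [[s0 s1] s2]. destruct HB as (A0 & A1 & A2 & Hl). cbn in *. subst s0.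
    assert (s1 = a) by (apply atom_le_eq; auto; eapply le_trans; [exact Hl | apply comp_sub_l; auto]).
    subst s1. assert (s2 = dom a) by (apply L_dom; auto). subst. reflexivity.
    - intros ->. assert (HB : Bset A (mk3 a a (dom a))) by (split; [|split; [|split]]; cbn; auto using dom_atom, dom_ok).
      split. { split; [exact HB | cbn; apply meet_r]. }
      apply Fin; auto. }
  split.
  { intro s; split.
    - intros [[HB H2] [_ [x [-> [HB' [_ Hp]]]]]].
    destruct s as [[s0 s1] s2]. destruct HB as (A0 & A1 & A2 & Hl). cbn in *. subst s1.
    assert (b = s0) by (apply atom_le_eq; auto; eapply le_trans; [exact Hl | apply comp_sub_l; auto]).
    subst s0. assert (s2 = dom b) by (apply L_dom; auto). subst. reflexivity.
    - intros ->. assert (HB : Bset A (mk3 b b (dom b))) by (split; [|split; [|split]]; cbn; auto using dom_atom, dom_ok).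
      split. { split; [exact HB | cbn; apply meet_r]. }
      apply Fin; auto. }
  split.
  { intro s; split.
    - intros [[HB H2] [_ [x [-> [HB' [_ Hp]]]]]].
    destruct s as [[s0 s1] s2]. destruct HB as (A0 & A1 & A2 & Hl). cbn in *. subst s2.
    assert (s1 = c) by (apply atom_le_eq; auto; eapply le_trans; [exact Hl | apply comp_sub_r; auto]).
    subst s1. assert (s0 = ran c) by (apply L_ran; auto). subst. reflexivity.
    - intros ->. assert (HB : Bset A (mk3 (ran c) c c)) by (split; [|split; [|split]]; cbn; auto using ran_atom, ran_ok).
      split. { split; [exact HB | cbn; apply meet_r]. }
      apply Fin; auto. }
  split.
  { intro s; split.
    - intros [[HB H2] [_ [x [-> [HB' [_ Hp]]]]]].
    destruct s as [[s0 s1] s2]. destruct HB as (A0 & A1 & A2 & Hl). cbn in *. subst s1.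
    assert (b = s2) by (apply atom_le_eq; auto; eapply le_trans; [exact Hl | apply comp_sub_r; auto]).
    subst s2. assert (s0 = ran b) by (apply L_ran; auto). subst. reflexivity.
    - intros ->. assert (HB : Bset A (mk3 (ran b) b b)) by (split; [|split; [|split]]; cbn; auto using ran_atom, ran_ok).
      split. { split; [exact HB | cbn; apply meet_r]. }
      apply Fin; auto. }
  split.
  { intro s; split.
    - intros [[HB H2] [_ [x [-> [HB' [_ Hp]]]]]].
    destruct s as [[s0 s1] s2]. destruct HB as (A0 & A1 & A2 & Hl). cbn in *. subst s2.
    assert (Hm : M s1 (C c s0) <> BOT) by (apply le_meet_nz; auto; apply atom_nz; auto).
    apply P1 in Hm. rewrite mC in Hm. apply atom_meet in Hm; auto.
    assert (s0 = V c).
    { apply atom_le_eq; auto using atom_conv. eapply le_trans; [exact Hm | apply comp_sub_r; auto]. }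
    subst s0.
    assert (s1 = dom c) by (apply atom_le_eq; auto using dom_atom; apply meet_glb; auto).
    subst. reflexivity.
    - intros ->. assert (HB : Bset A (mk3 (V c) (dom c) c)) by (split; [|split; [|split]]; cbn; auto using dom_atom, atom_conv; apply meet_l).
      split. { split; [exact HB | cbn; apply meet_r]. }
      apply Fin; auto. }
  { intro s; split.
    - intros [[HB H2] [_ [x [-> [HB' [_ Hp]]]]]].
    destruct s as [[s0 s1] s2]. destruct HB as (A0 & A1 & A2 & Hl). cbn in *. subst s0.
    assert (Hm : M s1 (C s2 a) <> BOT) by (apply le_meet_nz; auto; apply atom_nz; auto).
    apply P2 in Hm. rewrite mC in Hm. apply atom_meet in Hm; auto.
    assert (s2 = V a).
    { apply atom_le_eq; auto using atom_conv. eapply le_trans; [exact Hm | apply comp_sub_l; auto]. }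
    subst s2.
    assert (s1 = ran a) by (apply atom_le_eq; auto using ran_atom; apply meet_glb; auto).
    subst. reflexivity.
    - intros ->. assert (HB : Bset A (mk3 a (ran a) (V a))) by (split; [|split; [|split]]; cbn; auto using ran_atom, atom_conv; apply meet_l).
      split. { split; [exact HB | cbn; apply meet_r]. }
      apply Fin; auto. }
Qed.

End BA.

Theorem lemma6 (A : WA) (HA : atomic A) (t : triple A) (Ht : Bset A t) :
  (forall s, (Eset A I1 I0 s /\ Tstar A I0 (fun x => x = t) s) <->
             s = mk3 (t0 t) (t0 t) (dom (t0 t))) /\
  (forall s, (Eset A I0 I1 s /\ Tstar A I1 (fun x => x = t) s) <->
             s = mk3 (t1 t) (t1 t) (dom (t1 t))) /\
  (forall s, (Eset A I1 I2 s /\ Tstar A I2 (fun x => x = t) s) <->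
             s = mk3 (ran (t2 t)) (t2 t) (t2 t)) /\
  (forall s, (Eset A I2 I1 s /\ Tstar A I1 (fun x => x = t) s) <->
             s = mk3 (ran (t1 t)) (t1 t) (t1 t)) /\
  (forall s, (Eset A I0 I2 s /\ Tstar A I2 (fun x => x = t) s) <->
             s = mk3 (conv A (t2 t)) (dom (t2 t)) (t2 t)) /\
  (forall s, (Eset A I2 I0 s /\ Tstar A I0 (fun x => x = t) s) <->
             s = mk3 (t0 t) (ran (t0 t)) (conv A (t0 t))).
Proof.
  exact (main A HA t Ht).
Qed.
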